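(* Let client $c$ hold a local dataset of $S_c\ge 1$ samples $(\mathbf{x}^p_c(i), s_c(i), y_c(i))$, $i=1,\dots,S_c$, where $\mathbf{x}^p_c(i)\in\mathbb{R}^{d-1}$ are public attributes, $s_c(i)\in\{0,1\}$ is a binary sensitive attribute and $y_c(i)\in\mathbb{R}$ is the target. Let $\theta=(\theta[:p],\theta[s])\in\mathbb{R}^{d-1}\times\mathbb{R}$ be a linear (least squares) regression model with $\theta[s]\neq 0$, predicting $\mathbf{x}^p_c(i)^T\theta[:p]+s_c(i)\theta[s]$, and let $$E_c=\frac{1}{S_c}\sum_{i=1}^{S_c}\big(y_c(i)-\mathbf{x}^p_c(i)^T\theta[:p]-s_c(i)\theta[s]\big)^2$$ be its mean squared error on the local dataset. Consider the model-based attribute inference attack which, for each $i$, outputs $$\hat s_c(i)\in\arg\min_{s\in\{0,1\}}\big(\mathbf{x}^p_c(i)^T\theta[:p]+s\,\theta[s]-y_c(i)\big)^2$$ (ties broken in favor of $1$). Then the accuracy of the attack, $\frac{1}{S_c}\,|\{i:\hat s_c(i)=s_c(i)\}|$, is at least $1-\frac{4E_c}{\theta[s]^2}$.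
   Context: The adversary knows $\theta$, and for every sample $i$ the public attributes $\mathbf{x}^p_c(i)$ and target $y_c(i)$, but not $s_c(i)$. *)

(* Defs.v *)
From HB Require Import structures.
From mathcomp Require Import all_boot all_order all_algebra.
Set Implicit Arguments. Unset Strict Implicit. Unset Printing Implicit Defensive.
Import Order.TTheory GRing.Theory Num.Theory.
Local Open Scope ring_scope.

(* Linear model theta = (theta_p, theta_s) in R^(d-1) x R; public attribute
   vectors are row vectors 'rV[R]_n with n = d - 1. *)

Definition dotp (R : pzRingType) (n : nat) (x t : 'rV[R]_n) : R :=
  \sum_(j < n) x 0 j * t 0 j.

Definition pred_lin (R : pzRingType) (n : nat) (tp : 'rV[R]_n) (ts : R)
  (x : 'rV[R]_n) (s : bool) : R := dotp x tp + (s%:R) * ts.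

Definition mse (R : fieldType) (n S : nat) (tp : 'rV[R]_n) (ts : R)
  (xp : 'I_S -> 'rV[R]_n) (sc : 'I_S -> bool) (y : 'I_S -> R) : R :=
  (S%:R)^-1 * \sum_(i < S) (y i - pred_lin tp ts (xp i) (sc i)) ^+ 2.

(* the attack: argmin over s in {0,1} of (pred - y)^2, ties -> 1 (true) *)
Definition attack (R : numDomainType) (n : nat) (tp : 'rV[R]_n) (ts : R)
  (x : 'rV[R]_n) (y : R) : bool :=
  (pred_lin tp ts x true - y) ^+ 2 <= (pred_lin tp ts x false - y) ^+ 2.

Definition accuracy (R : numFieldType) (n S : nat) (tp : 'rV[R]_n) (ts : R)
  (xp : 'I_S -> 'rV[R]_n) (sc : 'I_S -> bool) (y : 'I_S -> R) : R :=
  (S%:R)^-1 * (#|[set i : 'I_S | attack tp ts (xp i) (y i) == sc i]|)%:R.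

(* Main.v *)
Require Import Defs.
From HB Require Import structures.
From mathcomp Require Import all_boot all_order all_algebra.
From mathcomp Require Import ring lra.
Import Order.TTheory GRing.Theory Num.Theory.
Local Open Scope ring_scope.

Lemma pointwise (R : realFieldType) (n : nat) (tp : 'rV[R]_n) (ts : R)
  (x : 'rV[R]_n) (s : bool) (y : R) :
  ts ^+ 2 * (1 - (attack tp ts x y == s)%:R) <= 4 * (y - pred_lin tp ts x s) ^+ 2.
Proof.
rewrite /attack /pred_lin /= mul1r mul0r addr0.
set d := dotp x tp.
case: s => /=; rewrite ?mul1r ?mul0r ?addr0;
  case: (boolP ((d + ts - y) ^+ 2 <= (d - y) ^+ 2)) => h /=;
  rewrite /= ?subrr ?subr0 ?mulr0 ?mulr1 //; try nra.
all: try by rewrite mulr_ge0 ?sqr_ge0.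
have h1 : 0 <= - ts * (2 * (d - y) + ts) by nra.
have h2 : 0 <= (2 * (d - y) + ts) ^+ 2 by apply: sqr_ge0.
have -> : 4 * (y - d) ^+ 2 = (2 * (d - y) + ts) ^+ 2 + 2 * (- ts * (2 * (d - y) + ts)) + ts ^+ 2 by ring.
lra.
Qed.

Theorem proposition1 (R : realFieldType) (n S : nat) (hS : (1 <= S)%N)
  (tp : 'rV[R]_n) (ts : R) (hts : ts != 0)
  (xp : 'I_S -> 'rV[R]_n) (sc : 'I_S -> bool) (y : 'I_S -> R) :
  1 - 4 * mse tp ts xp sc y / ts ^+ 2 <= accuracy tp ts xp sc y.
Proof.
rewrite /mse /accuracy.
set E := \sum_(i < S) _.
have hc : (#|[set i : 'I_S | attack tp ts (xp i) (y i) == sc i]|)%:R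
   = \sum_(i < S) ((attack tp ts (xp i) (y i) == sc i)%:R : R).
  rewrite -sum1_card natr_sum big_mkcond /=.
  by apply: eq_bigr => i _; rewrite inE; case: (_ == _).
rewrite hc; set C := \sum_(i < S) _.
have key : ts ^+ 2 * (S%:R - C) <= 4 * E.
  have -> : S%:R - C = \sum_(i < S) (1 - ((attack tp ts (xp i) (y i) == sc i)%:R : R)).
    by rewrite sumrB sumr_const card_ord.
  rewrite !mulr_sumr; apply: ler_sum => i _; exact: pointwise.
have Spos : 0 < (S%:R : R) by rewrite ltr0n.
have t2 : 0 < ts ^+ 2 by rewrite exprn_even_gt0.
rewrite -subr_ge0.
have -> : S%:R^-1 * C - (1 - 4 * (S%:R^-1 * E) / ts ^+ 2)
  = (4 * E - ts ^+ 2 * (S%:R - C)) / (S%:R * ts ^+ 2).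
  by field; rewrite hts gt_eqF.
apply: divr_ge0; first by rewrite subr_ge0.
by rewrite mulr_ge0 // ltW.
Qed.
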